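(* Let $G$ be an innately transitive permutation group on a finite set $\Omega$ with plinth $M$, and fix $\omega\in\Omega$. Then the map $\mathcal E\mapsto\mathcal K_\omega(\mathcal E)$ is a bijection from $\mathrm{CD}(G)$ to the set of Cartesian systems of subgroups of $M$ with respect to $\omega$ that are invariant under conjugation by $G_\omega$.
   Context: A permutation group is innately transitive if it has a transitive minimal normal subgroup, called a plinth. A Cartesian decomposition of $\Omega$ is a set $\mathcal E=\{\Gamma_1,\dots,\Gamma_\ell\}$, $\ell\ge2$, of partitions of $\Omega$ with $|\gamma_1\cap\cdots\cap\gamma_\ell|=1$ for all $\gamma_i\in\Gamma_i$; $\mathrm{CD}(G)$ is the set of $G$-invariant Cartesian decompositions of $\Omega$. (Every $\mathcal E\in\mathrm{CD}(G)$ has each partition fixed by $M$.) For such $\mathcal E$, $\mathcal K_\omega(\mathcal E)=\{M_{\gamma_1},\dots,M_{\gamma_\ell}\}$, where $\gamma_i$ is the block of $\Gamma_i$ containing $\omega$ and $M_{\gamma_i}$ its setwise stabiliser. A set $\{K_1,\dots,K_\ell\}$ ($\ell\ge2$) of subgroups of $M$ is a Cartesian system of subgroups of $M$ with respect to $\omega$ if $\bigcap_iK_i=M_\omega$ and $K_i(\bigcap_{j\ne i}K_j)=M$ for all $i$. *)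

(* Defs.v *)
From HB Require Import structures.
From mathcomp Require Import all_boot all_fingroup all_solvable.
Set Implicit Arguments. Unset Strict Implicit. Unset Printing Implicit Defensive.

Section CD.
Variable T : finType.
Local Open Scope group_scope.

Definition perm_part (g : {perm T}) (P : {set {set T}}) : {set {set T}} :=
  [set [set g x | x in B] | B : {set T} in P].

Definition cart_decomp (E : {set {set {set T}}}) : Prop :=
  [/\ (2 <= #|E|)%N,
      {in E, forall P, partition P [set: T]} &
      forall f : {set {set T}} -> {set T},
        {in E, forall P, f P \in P} -> #|\bigcap_(P in E) f P| = 1%N].

Definition CD (G : {group {perm T}}) (E : {set {set {set T}}}) : Prop :=
  cart_decomp E /\ {in G, forall g, {in E, forall P, perm_part g P \in E}}.

Definition Kmap (M : {group {perm T}}) (w : T) (E : {set {set {set T}}})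
  : {set {set {perm T}}} :=
  [set 'N_M(pblock P w | 'P) | P in E].

Definition cart_system (M : {group {perm T}}) (w : T) (S : {set {set {perm T}}})
  : Prop :=
  [/\ (2 <= #|S|)%N,
      {in S, forall K, group_set K /\ K \subset M},
      \bigcap_(K in S) K = 'C_M[w | 'P] &
      {in S, forall K, K * (\bigcap_(K' in S :\ K) K') = M}].

Definition conj_invariant (G : {group {perm T}}) (w : T) (S : {set {set {perm T}}})
  : Prop :=
  {in 'C_G[w | 'P], forall g, {in S, forall K, K :^ g \in S}}.

End CD.

(* Main.v *)
Require Import Defs.
From HB Require Import structures.
From mathcomp Require Import all_boot all_fingroup all_solvable.
From mathcomp Require Import zify.
Set Implicit Arguments. Unset Strict Implicit. Unset Printing Implicit Defensive.
Local Open Scope group_scope.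

Lemma sumdiv_lt p : 1 < p -> forall m n, 0 < n ->
  (\sum_(1 <= k < m.+1) n %/ p ^ k < n)%N.
Proof.
move=> p1; elim=> [|m IH] n n0; first by rewrite big_geq.
rewrite big_ltn // expn1 big_add1 /=.
under eq_bigr => k _ do rewrite expnS divnMA.
have [q0|qp] := posnP (n %/ p).
  rewrite q0; under eq_bigr => k _ do rewrite div0n.
  by rewrite big1 // add0n.
have := IH (n %/ p) qp.
have h2: (2 * (n %/ p) <= n)%N.
  apply: leq_trans (leq_divM n p); rewrite mulnC leq_mul2l p1 orbT //.
lia.
Qed.

Lemma logn_fact_lt p n : prime p -> 0 < n -> (logn p n`! < n)%N.
Proof.
move=> pp n0; rewrite logn_fact //; apply: sumdiv_lt => //; exact: prime_gt1.
Qed.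

Section Parts.
Variable T : finType.
Implicit Types (P Q : {set {set T}}) (g m : {perm T}) (x y : T).

Lemma perm_partE g P : perm_part g P = (('P^*)^*)%act P g.
Proof. by []. Qed.

Lemma perm_partM g h P : perm_part (g * h) P = perm_part h (perm_part g P).
Proof. by rewrite !perm_partE actM. Qed.

Lemma perm_part1 P : perm_part 1 P = P.
Proof. by rewrite perm_partE act1. Qed.

Lemma perm_partK g P : perm_part g^-1 (perm_part g P) = P.
Proof. by rewrite -perm_partM mulgV perm_part1. Qed.

Lemma perm_part_inj g : injective (perm_part g).
Proof. exact: can_inj (perm_partK g). Qed.

Lemma card_perm_part g P : #|perm_part g P| = #|P|.
Proof. by rewrite card_imset //; apply: imset_inj; apply: perm_inj. Qed.

Lemma part_cover P x : partition P [set: T] -> x \in cover P.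
Proof. by case/and3P=> /eqP-> _ _; rewrite inE. Qed.

Lemma part_triv P : partition P [set: T] -> trivIset P.
Proof. by case/and3P. Qed.

Lemma pblock_memT P x : partition P [set: T] -> pblock P x \in P.
Proof. by move=> pP; apply: pblock_mem; apply: part_cover. Qed.

Lemma mem_pblockT P x : partition P [set: T] -> x \in pblock P x.
Proof. by move=> pP; rewrite mem_pblock part_cover. Qed.

Lemma pblock_eqP P x y : partition P [set: T] ->
  (y \in pblock P x) = (pblock P y == pblock P x).
Proof.
move=> pP; apply/idP/eqP=> [yx|<-]; last exact: mem_pblockT.
by apply: def_pblock (part_triv pP) (pblock_memT x pP) yx.
Qed.

Lemma perm_part_partition g P : partition P [set: T] ->
  partition (perm_part g P) [set: T].
Proof.
move=> pP; case/and3P: (pP) => _ tP nP; apply/and3P; split.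
- apply/eqP/setP=> x; rewrite inE; apply/bigcupP.
  exists [set g y | y in pblock P (g^-1 x)]; first exact: imset_f (pblock_memT _ pP).
  by apply/imsetP; exists (g^-1 x); [apply: mem_pblockT|rewrite permKV].
- by rewrite /perm_part imset_trivIset //; apply: perm_inj.
- apply/imsetP=> -[B BP /esym/eqP]; rewrite imset_eq0 => /eqP B0.
  by move: nP; rewrite -B0 BP.
Qed.

Lemma pblock_perm_part g P x : partition P [set: T] ->
  pblock (perm_part g P) (g x) = [set g y | y in pblock P x].
Proof.
move=> pP; apply: def_pblock.
- exact: part_triv (perm_part_partition g pP).
- exact: imset_f (pblock_memT _ pP).
- exact: imset_f (mem_pblockT _ pP).
Qed.

Lemma pblock_inv g P x : partition P [set: T] -> perm_part g P = P ->
  pblock P (g x) = [set g y | y in pblock P x].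
Proof. by move=> pP inv; rewrite -{1}inv pblock_perm_part. Qed.

Lemma mem_imset_perm g (B : {set T}) y : (g y \in [set g z | z in B]) = (y \in B).
Proof. by rewrite mem_imset //; apply: perm_inj. Qed.

End Parts.

Section CDfacts.
Variable T : finType.
Variable E : {set {set {set T}}}.
Hypothesis cdE : cart_decomp E.

Lemma cd_part P : P \in E -> partition P [set: T].
Proof. by case: cdE => _ h _; apply: h. Qed.

Lemma cd_point x y : {in E, forall P, pblock P x = pblock P y} -> x = y.
Proof.
move=> eqb; case: cdE => _ _ /(_ (fun P => pblock P x)).
have h: {in E, forall P, pblock P x \in P} by move=> P PE; apply: pblock_memT; apply: cd_part.
move=> /(_ h) /eqP /cards1P [a Ha].
have xin: x \in \bigcap_(P in E) pblock P x.
  by apply/bigcapP=> P PE; apply: mem_pblockT; apply: cd_part.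
have yin: y \in \bigcap_(P in E) pblock P x.
  by apply/bigcapP=> P PE; rewrite eqb //; apply: mem_pblockT; apply: cd_part.
by move: xin yin; rewrite Ha !inE => /eqP-> /eqP->.
Qed.

Lemma cd_exists (f : {set {set T}} -> {set T}) :
  {in E, forall P, f P \in P} -> exists x, {in E, forall P, x \in f P}.
Proof.
move=> h; case: cdE => _ _ /(_ f h) /eqP /cards1P [a Ha].
exists a => P PE; have: a \in \bigcap_(P in E) f P by rewrite Ha set11.
by move/bigcapP; apply.
Qed.

Lemma cd_card : #|[set: T]| = (\prod_(P in E) #|P|)%N.
Proof.
pose pi x : {ffun {set {set T}} -> {set T}} :=
  [ffun P => if P \in E then pblock P x else set0].
have pi_inj : injective pi.
  move=> x y /ffunP eq; apply: cd_point => P PE.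
  by have := eq P; rewrite !ffunE PE.
have -> : #|[set: T]| = #|pfamily set0 E (fun P : {set {set T}} => P)|.
  rewrite -(card_imset _ pi_inj); apply: eq_card => f.
  apply/imsetP/pfamilyP => [[x _ ->]|[supp memf]].
    split.
      apply/subsetP=> P; rewrite inE ffunE; by case: (P \in E); rewrite ?eqxx.
    by move=> P PE; rewrite ffunE PE; apply: pblock_memT; apply: cd_part.
  have [x hx] := cd_exists memf.
  exists x => //; apply/ffunP=> P; rewrite ffunE.
  case: ifP => PE.
    have := memf P PE; rewrite /= => mP; symmetry.
    by apply: def_pblock (part_triv (cd_part PE)) mP _; apply: hx.
  apply/eqP; apply: contraFT PE => nz.
  by apply: (subsetP supp); rewrite inE.
rewrite (card_pfamily set0 E (fun P : {set {set T}} => mem P)) foldrE big_map big_enum_cond /=.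
by apply: eq_bigl => P; rewrite andbT.
Qed.

End CDfacts.

Section HardLemma.
Variable T : finType.

Lemma cd_Minv (G M : {group {perm T}}) (w : T) (E : {set {set {set T}}}) :
  M <| G -> minnormal M G -> [transitive M, on [set: T] | 'P] -> CD G E ->
  forall m P, m \in M -> P \in E -> perm_part m P = P.
Proof.
move=> nMG minM trM [cdE invE] m0 P0 Mm0 P0E.
apply/eqP; apply/negPn/negP => mov.
have pP0 := cd_part cdE P0E.
have P0gt1 : 1 < #|P0|.
  rewrite ltnNge; apply: contra mov => le1.
  case/and3P: pP0 => /eqP cov _ _.
  move: le1; rewrite leq_eqVlt ltnS leqn0 cards_eq0.
  case/orP=> [/cards1P [B PB]|/eqP P00].
    move: cov; rewrite PB cover1 => ->.
    rewrite /perm_part imset_set1; apply/eqP; congr [set _].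
    apply/eqP; rewrite eqEcard subsetT /= card_imset //; exact: perm_inj.
  by move: cov; rewrite P00 /cover big_set0 => /setP /(_ w); rewrite !inE.
set p := pdiv #|P0|.
have pp : prime p := pdiv_prime P0gt1.
pose to2 := ((perm_action T)^*^*)%act.
set A := [set P in E | (p %| #|P|) && [exists m in M, perm_part m P != P]].
have P0A : P0 \in A.
  rewrite inE P0E pdiv_dvd /=; apply/existsP; exists m0; by rewrite Mm0.
have AE : A \subset E by apply/subsetP=> P; rewrite inE => /andP[].
have actsA : G \subset 'N(A | to2).
  have h: forall g P, g \in G -> P \in A -> to2 P g \in A.
    move=> g P Gg; rewrite !inE -!perm_partE card_perm_part.
    case/and3P=> [PE pd /existsP [m /andP[Mm mv]]].
    rewrite invE // pd /=; apply/existsP; exists (m ^ g).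
    rewrite memJ_norm ?(subsetP (normal_norm nMG)) // Mm /=.
    rewrite -perm_partM conjgE !mulgA mulgV mul1g perm_partM.
    by rewrite (inj_eq (@perm_part_inj _ g)).
  apply/subsetP => g Gg; apply/astabsP => P; apply/idP/idP; last exact: h.
  by move=> /(h g^-1 _ (groupVr Gg)); rewrite actK.
have N1 : 'C_M(A | to2) = 1.
  move/mingroupP: minM => [_ minH].
  case: (eqVneq 'C_M(A | to2) 1) => // ntN; exfalso.
  have nN : G \subset 'N('C_M(A | to2)).
    apply: normsI; [exact: normal_norm | exact: subset_trans actsA (astab_norm _ _)].
  have := minH ('C_M(A | to2))%G; rewrite /= ntN nN => /(_ isT (subsetIl _ _)) eqN.
  move: Mm0; rewrite -eqN => /setIP [_ /astabP /(_ P0 P0A)].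
  by rewrite -perm_partE => /eqP; rewrite (negbTE mov).
have cardM : #|M| %| #|A|`!.
  pose M2 := (actperm to2 @* M)%G.
  have cM2 : #|M2| = #|M|.
    rewrite /M2 /= card_morphim setTI -indexgI.
    rewrite (_ : M :&: 'ker _ = 1) ?indexg1 //.
    apply/trivgP; rewrite -N1; apply: setIS.
    have kE := ker_actperm to2; apply/subsetP => x xk.
    have : x \in 'C([set: {set {set T}}] | to2) by rewrite -kE.
    by apply: subsetP; apply: astabS; rewrite subsetT.
  have sM2 : M2 \subset 'N(A | 'P).
    apply/subsetP=> x /morphimP [m _ Mm ->]; apply/astabsP => P.
    rewrite -[act _ P _]/(actperm to2 m P) actpermE.
    by have /astabsP := subsetP actsA m (subsetP (normal_sub nMG) m Mm); apply.
  have cR : #|restr_perm A @* M2| = #|M2|.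
    rewrite card_morphim (setIidPr sM2) -indexgI.
    rewrite (_ : M2 :&: 'ker _ = 1) ?indexg1 //.
    have kE := ker_restr_perm A.
    apply/trivgP/subsetP => x /setIP [/morphimP [m _ Mm ->] cx0].
    have cx : actperm to2 m \in 'C(A | 'P) by rewrite -kE.
    have : m \in 'C_M(A | to2).
      rewrite inE Mm; apply/astabP => P PA; rewrite -actpermE.
      have := astabP cx P PA; by rewrite /= /aperm => ->.
    move=> mC; have : m \in (1 : {set {perm T}}) by rewrite -N1.
    by move/set1P => ->; rewrite morph1 set11.
  rewrite -cM2 -cR -(perm.card_Sym A); apply: cardSg.
  apply/subsetP=> y /morphimP [x _ _ ->]; rewrite inE; exact: restr_perm_on.
have cardT : #|[set: T]| %| #|M|.
  by rewrite -(atransP trM w (in_setT w)) card_orbit dvdn_indexg.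
have pA : p ^ #|A| %| #|[set: T]|.
  rewrite (cd_card cdE) (big_setID A) /= (setIidPr AE) -prod_nat_const.
  apply: dvdn_mulr; apply: (big_ind2 (fun a b => a %| b)) => //.
    by move=> a b c d ab cd; apply: dvdn_mul.
  by move=> P; rewrite inE => /and3P[].
have Apos : 0 < #|A| by apply/card_gt0P; exists P0.
have := logn_fact_lt pp Apos.
have : #|A| <= logn p #|A|`!.
  rewrite -pfactor_dvdn ?fact_gt0 //.
  exact: dvdn_trans pA (dvdn_trans cardT cardM).
by rewrite leqNgt => /negbTE ->.
Qed.

End HardLemma.

Section Forward.
Variable T : finType.
Variables (M : {group {perm T}}) (w : T).
Hypothesis trM : [transitive M, on [set: T] | 'P].

Definition Minv (P : {set {set T}}) :=
  partition P [set: T] /\ forall m, m \in M -> perm_part m P = P.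

Lemma trans_ex x : exists2 m, m \in M & x = m w.
Proof.
have : x \in orbit 'P M w by rewrite (atransP trM w (in_setT w)) in_setT.
by case/orbitP => m Mm <-; exists m.
Qed.

Lemma Kof_mem P m : Minv P -> m \in M ->
  (m \in 'N(pblock P w | 'P)) = (m w \in pblock P w).
Proof.
move=> [pP inv] Mm; apply/idP/idP => [/astabsP /(_ w)|mw].
  by rewrite /= /aperm => ->; apply: mem_pblockT.
have e : [set m y | y in pblock P w] = pblock P w.
  by rewrite -pblock_inv ?inv //; apply/eqP; rewrite -pblock_eqP.
apply/astabsP => y; rewrite /= /aperm -{1}e; exact: mem_imset_perm.
Qed.

Lemma Kof_memM P m : Minv P ->
  (m \in 'N_M(pblock P w | 'P)) = (m \in M) && (m w \in pblock P w).
Proof.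
move=> iP; rewrite inE; case Mm: (m \in M) => //=; exact: Kof_mem.
Qed.

Lemma Minv_sub P Q : Minv P -> Minv Q ->
  'N_M(pblock P w | 'P) = 'N_M(pblock Q w | 'P) -> P \subset Q.
Proof.
move=> iP iQ eK.
have eB : pblock P w = pblock Q w.
  apply/setP => y; have [m Mm ->] := trans_ex y.
  by have := Kof_memM m iP; rewrite eK Kof_memM // Mm /= => <-.
apply/subsetP => B PB.
have : B != set0 by apply: contraTneq PB => ->; case/and3P: iP.1.
case/set0Pn => x xB; have [m Mm ex] := trans_ex x.
have -> : B = pblock P x by apply/esym/def_pblock => //; apply: part_triv iP.1.
rewrite ex pblock_inv ?iP.2 //; try exact: iP.1.
rewrite eB -pblock_inv ?iQ.2 //; try exact: iQ.1.
exact: pblock_memT iQ.1.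
Qed.

Lemma Minv_inj P Q : Minv P -> Minv Q ->
  'N_M(pblock P w | 'P) = 'N_M(pblock Q w | 'P) -> P = Q.
Proof.
move=> iP iQ e; apply/eqP; rewrite eqEsubset !Minv_sub //.
Qed.

End Forward.

Lemma forward (T : finType) (G M : {group {perm T}}) (w : T) (E : {set {set {set T}}}) :
  M <| G -> minnormal M G -> [transitive M, on [set: T] | 'P] -> CD G E ->
  cart_system M w (Kmap M w E) /\ conj_invariant G w (Kmap M w E).
Proof.
move=> nMG minM trM cdG; have [cdE invE] := cdG.
have pE : forall P, P \in E -> partition P [set: T].
  by move=> P PE; have := cd_part cdE PE.
have iE : forall P, P \in E -> Minv M P.
  move=> P PE; split. have := pE _ PE. done. move=> m Mm; exact: cd_Minv nMG minM trM cdG m P Mm PE.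
have cK : #|Kmap M w E| = #|E|.
  apply: card_in_imset => P Q PE QE e; have := Minv_inj trM (iE P PE) (iE Q QE) e; done.
have E2 : 2 <= #|E| by case: cdE.
have KE : forall K, K \in Kmap M w E -> exists2 P, P \in E & K = 'N_M(pblock P w | 'P).
  by move=> K /imsetP [P PE ->]; exists P.
split; last first.
  move=> g /setIP [Gg /astab1P gw] K /KE [P PE ->].
  have gPE := invE g Gg P PE.
  suff -> : 'N_M(pblock P w | 'P) :^ g = 'N_M(pblock (perm_part g P) w | 'P).
    exact: imset_f.
  have iPE := iE P PE; have igP := iE _ gPE.
  apply/setP => x; rewrite -{1}(invgK g) mem_conjgV !Kof_memM //.
  rewrite memJ_norm; last by rewrite groupV (subsetP (normal_norm nMG)).
  case: (x \in M) => //=.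
  have gw' : g w = w by [].
  rewrite -{4}gw' pblock_perm_part; last by have := pE _ PE.
  rewrite -{1}(permKV g (x w)) mem_imset_perm.
  by rewrite conjgE invgK !permM gw'.
split => //.
- by rewrite cK.
- move=> K /KE [P PE ->]; split; last exact: subsetIl.
  exact: groupP.
- apply/setP => m; apply/bigcapP/idP => [h|].
    have [P PE] : exists P, P \in E.
      by apply/card_gt0P; apply: leq_trans E2.
    have hP : forall Q, Q \in E -> (m \in M) && (m w \in pblock Q w).
      move=> Q QE; have iQ := iE Q QE; rewrite -Kof_memM //.
      by have := h _ (imset_f (fun P => 'N_M(pblock P w | 'P)) QE).
    have /andP [Mm _] := hP P PE.
    rewrite inE Mm; apply/astab1P; rewrite /= /aperm.
    apply: (cd_point cdE) => Q QE; apply/eqP; rewrite -pblock_eqP ?(pE _ QE) //.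
    by case/andP: (hP Q QE).
  rewrite inE => /andP [Mm /astab1P mw] K /KE [P PE ->].
  have iP := iE P PE; rewrite Kof_memM // Mm /=; move: mw; rewrite /= /aperm => ->.
  by apply: mem_pblockT; apply: pE _ PE.
- move=> K /KE [P PE ->]; apply/eqP; rewrite eqEsubset; apply/andP; split.
    apply/subsetP => x /mulsgP [k i kK iI ->].
    have Mk : k \in M by move: kK; rewrite inE => /andP[].
    have : 0 < #|Kmap M w E :\ 'N_M(pblock P w | 'P)|.
      move: E2; rewrite -cK (cardsD1 ('N_M(pblock P w | 'P))).
      by rewrite (imset_f (fun P => 'N_M(pblock P w | 'P)) PE).
    case/card_gt0P => K' K'in.
    have := bigcapP iI K' K'in; move: K'in => /setD1P [_ /KE [Q QE ->]].
    by rewrite inE => /andP [Mi _]; rewrite groupM.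
  apply/subsetP => m Mm.
  pose f Q := if Q == P then pblock P (m w) else pblock Q w.
  have [x hx] : exists x, {in E, forall Q, x \in f Q}.
    apply: (cd_exists cdE) => Q QE; rewrite /f; case: eqP => [->|_];
      by apply: pblock_memT; apply: pE.
  have [j Mj ex] := trans_ex w trM x.
  have jI : j \in \bigcap_(K' in Kmap M w E :\ 'N_M(pblock P w | 'P)) K'.
    apply/bigcapP => K' /setD1P [neq /KE [Q QE eK']].
    have QP : Q != P by apply: contraNneq neq => QP; rewrite eK' QP.
    have := hx Q QE; rewrite /f (negbTE QP) ex => jQ.
    by have iQ := iE Q QE; rewrite eK' Kof_memM // Mj.
  have := hx P PE; rewrite /f eqxx ex pblock_eqP ?(pE _ PE) // => /eqP ejm.
  rewrite -(mulgKV j m); apply: mem_mulg => //.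
  have iP := iE P PE; rewrite Kof_memM // groupM ?groupV //= permM.
  have pP := pE _ PE.
  rewrite pblock_eqP // pblock_inv ?(iE P PE).2 ?groupV // -ejm.
  by rewrite -pblock_inv ?(iE P PE).2 ?groupV // permK.
Qed.

Lemma gsM (gT : finGroupType) (K : {set gT}) x y : group_set K -> x \in K -> y \in K -> x * y \in K.
Proof. by move=> gK; apply: (@groupM _ (Group gK)). Qed.

Lemma gsV (gT : finGroupType) (K : {set gT}) x : group_set K -> x \in K -> x^-1 \in K.
Proof. by move=> gK; apply: (@groupVr _ (Group gK)). Qed.

Lemma rcosetJ' (gT : finGroupType) (A : {set gT}) x y : (A :* x) :^ y = A :^ y :* x ^ y.
Proof. by rewrite conjsMg conjg_set1. Qed.

Lemma perm_part_preim (T : finType) (X Y : eqType) (g : {perm T}) (f : T -> X) (h : T -> Y)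
  (th : X -> Y) : injective th -> (forall x, h (g x) = th (f x)) ->
  perm_part g (preim_partition f [set: T]) = preim_partition h [set: T].
Proof.
move=> thi hf.
have key : forall x, [set g y | y in [set y in [set: T] | f x == f y]] =
                     [set y in [set: T] | h (g x) == h y].
  move=> x; apply/setP => z; rewrite -{1}(permKV g z) mem_imset_perm !inE /=.
  by rewrite -{2}(permKV g z) !hf (inj_eq thi).
apply/setP => B; apply/imsetP/imsetP => [[B' /imsetP [x _ ->] ->]|[x _ ->]].
  by exists (g x); rewrite ?in_setT // key.
exists [set y in [set: T] | f (g^-1 x) == f y]; first exact: imset_f (in_setT _).
by rewrite key permKV.
Qed.

Lemma coset_meet (gT : finGroupType) (S : {set {set gT}}) (M : {group gT}) :
  {in S, forall K, group_set K /\ K \subset M} ->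
  {in S, forall K, K * (\bigcap_(K' in S :\ K) K') = M} ->
  forall mf : {set gT} -> gT, {in S, forall K, mf K \in M} ->
  exists2 r, r \in M & {in S, forall K, r * (mf K)^-1 \in K}.
Proof.
move=> hS hP mf Mmf.
suff: forall l : seq {set gT}, {subset l <= S} ->
        exists2 r, r \in M & {in l, forall K, r * (mf K)^-1 \in K}.
  by case/(_ (enum S)) => [K|r Mr h]; rewrite ?mem_enum // => //; exists r => // K KS; apply: h; rewrite mem_enum.
elim=> [|K l IH] sub; first by exists 1 => //.
have [r Mr hr] : exists2 r, r \in M & {in l, forall K, r * (mf K)^-1 \in K}.
  by apply: IH => K' K'l; apply: sub; rewrite inE K'l orbT.
have KS : K \in S by apply: sub; rewrite inE eqxx.
case Kl: (K \in l).
  by exists r => // K'; rewrite inE => /orP [/eqP ->|]; [apply: hr|apply: hr].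
have [gK sK] := hS K KS.
have : mf K * r^-1 \in M by rewrite groupM ?groupV // Mmf.
rewrite -{1}(hP K KS) => /mulsgP [k i kK iI e].
have kM : k \in M by apply: (subsetP sK).
exists (k^-1 * mf K); first by rewrite groupM ?groupV // Mmf.
have ei : k^-1 * mf K = i * r by rewrite -(mulgKV r (mf K)) e !mulgA mulVg mul1g.
move=> K'; rewrite inE => /orP [/eqP ->|K'l].
  by rewrite -mulgA mulgV mulg1 gsV.
have K'S : K' \in S by apply: sub; rewrite inE K'l orbT.
have [gK' _] := hS K' K'S.
rewrite ei -mulgA; apply: gsM => //; last exact: hr.
apply: (bigcapP iI); rewrite !inE K'S andbT.
by apply: contraFneq Kl => <-.
Qed.

Section Surj.
Variables (T : finType) (G M : {group {perm T}}) (w : T).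
Hypotheses (nMG : M <| G) (trM : [transitive M, on [set: T] | 'P]).
Variable S : {set {set {perm T}}}.
Hypotheses (csS : cart_system M w S) (ciS : conj_invariant G w S).

Definition cset x := [set m in M | m w == x].
Definition phi (K : {set {perm T}}) x := K * cset x.
Definition Gam K := preim_partition (phi K) [set: T].

Lemma KS_gs K : K \in S -> group_set K.
Proof. by case: csS => _ h _ _ KS; case: (h K KS). Qed.

Lemma KS_sub K : K \in S -> K \subset M.
Proof. by case: csS => _ h _ _ KS; case: (h K KS). Qed.

Lemma KS_Mw K : K \in S -> 'C_M[w | 'P] \subset K.
Proof. by case: csS => _ _ <- _ KS; apply: bigcap_inf. Qed.

Lemma cset_rcoset m : m \in M -> cset (m w) = 'C_M[w | 'P] :* m.
Proof.
move=> Mm; apply/setP => y; rewrite mem_rcoset in_setI [y \in cset _]inE groupMr ?groupV //.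
case: (y \in M) => //=; apply/eqP/astab1P => [e|]; rewrite /= /aperm permM.
  by rewrite e permK.
by move=> e; rewrite -(permKV m (y w)) e.
Qed.

Lemma phi_wm K m : K \in S -> m \in M -> phi K (m w) = K :* m.
Proof.
move=> KS Mm; rewrite /phi cset_rcoset // mulgA.
by have := @mulGSid _ (Group (KS_gs KS)) ('C_M[w | 'P])%G (KS_Mw KS); rewrite /= => ->.
Qed.

Lemma pblock_Gam K x y : (y \in pblock (Gam K) x) = (phi K x == phi K y).
Proof.
apply: (pblock_equivalence_partition _ (in_setT x) (in_setT y)).
by move=> a b c _ _ _; split => // /eqP ->.
Qed.

Lemma part_Gam K : partition (Gam K) [set: T].
Proof. exact: preim_partitionP. Qed.

Lemma Gam_Minv K : K \in S -> Minv M (Gam K).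
Proof.
move=> KS; split; first exact: part_Gam.
move=> m Mm; apply: perm_part_preim (can_inj (rcosetK m)) _ => x.
have [m1 Mm1 ->] := trans_ex w trM x.
by rewrite -permM !phi_wm ?groupM // rcosetM.
Qed.

Lemma Gam_conj K h : K \in S -> h \in 'C_G[w | 'P] -> perm_part h (Gam K) = Gam (K :^ h).
Proof.
move=> KS hC; have KhS := ciS hC KS.
move: hC => /setIP [Gh /astab1P hw].
apply: perm_part_preim (can_inj (conjsgK h)) _ => x.
have [m1 Mm1 ->] := trans_ex w trM x.
have Mm1h : m1 ^ h \in M by rewrite memJ_norm // (subsetP (normal_norm nMG)).
rewrite -permM conjgC permM.
have hw' : h w = w by [].
by rewrite hw' !phi_wm // rcosetJ'.
Qed.

Lemma Gam_stab K : K \in S -> 'N_M(pblock (Gam K) w | 'P) = K.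
Proof.
move=> KS; pose KG := Group (KS_gs KS).
have iG := Gam_Minv KS.
apply/setP => m; rewrite Kof_memM // pblock_Gam.
have pw : phi K w = K.
  have w1 : w = (1 : {perm T}) w by rewrite perm1.
  by rewrite {1}w1 phi_wm // rcoset1.
rewrite pw; case Mm: (m \in M) => /=; last first.
  by apply/esym; apply: contraFF Mm; apply: (subsetP (KS_sub KS)).
rewrite phi_wm //; apply/eqP/idP => [e|mK].
  have : m \in K :* m by exact: (@rcoset_refl _ KG m).
  by rewrite -e.
by rewrite (@rcoset_id _ KG m mK).
Qed.

Lemma surj_main : exists E, CD G E /\ Kmap M w E = S.
Proof.
pose E := [set Gam K | K in S].
have KmE : Kmap M w E = S.
  rewrite /Kmap -imset_comp; rewrite (eq_in_imset (g := id)) ?imset_id //.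
  by move=> K KS /=; apply: Gam_stab.
exists E; split => //; split; last first.
  move=> g Gg _ /imsetP [K KS ->].
  have [m Mm egm] := trans_ex w trM (g w).
  have Gm : m \in G by apply: (subsetP (normal_sub nMG)).
  have hC : g * m^-1 \in 'C_G[w | 'P].
    rewrite inE groupM ?groupV //=; apply/astab1P; rewrite /= /aperm permM egm.
    by rewrite permK.
  rewrite -(mulgKV m g) perm_partM Gam_conj //.
  by rewrite (Gam_Minv (ciS hC KS)).2 //; apply: imset_f; apply: ciS.
split.
- case: csS => S2 _ _ _; apply: leq_trans S2 _.
  by rewrite -{1}KmE; apply: leq_imset_card.
- by move=> P /imsetP [K _ ->]; apply: part_Gam.
move=> f hf.
have /fin_all_exists [mf hmf] : forall K, exists m : {perm T},
    K \in S -> m \in M /\ f (Gam K) = pblock (Gam K) (m w).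
  move=> K; case KS: (K \in S); last by exists 1.
  have fP : f (Gam K) \in Gam K by apply: hf; apply: imset_f.
  have : f (Gam K) != set0.
    by apply: contraTneq fP => ->; case/and3P: (part_Gam K).
  case/set0Pn => x xf; have [m Mm ex] := trans_ex w trM x.
  exists m => _; split => //; rewrite -ex; apply/esym.
  exact: def_pblock (part_triv (part_Gam K)) fP xf.
have [r Mr hr] : exists2 r, r \in M & {in S, forall K, r * (mf K)^-1 \in K}.
  case: csS => _ h1 _ h2; apply: coset_meet => // K KS; by case: (hmf K KS).
apply/eqP/cards1P; exists (r w); apply/setP => y; rewrite inE.
apply/bigcapP/eqP => [h|->].
  have [j Mj ey] := trans_ex w trM y; rewrite ey in h *.
  have jK : forall K, K \in S -> j * r^-1 \in K.
    move=> K KS; have [MmK eK] := hmf K KS.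
    have := h _ (imset_f Gam KS); rewrite eK pblock_Gam !phi_wm // => /eqP e.
    have : j \in K :* mf K by rewrite e; exact: (@rcoset_refl _ (Group (KS_gs KS)) j).
    rewrite mem_rcoset => jm; have rm := hr K KS.
    have gK := KS_gs KS.
    have -> : j * r^-1 = (j * (mf K)^-1) * (r * (mf K)^-1)^-1.
      by rewrite invMg invgK mulgA mulgKV.
    by apply: gsM => //; apply: gsV.
  have : j * r^-1 \in 'C_M[w | 'P].
    by case: csS => _ _ <- _; apply/bigcapP.
  case/setIP => _ /astab1P; rewrite /= /aperm permM => e.
  by rewrite -(permKV r (j w)) e.
move=> P /imsetP [K KS ->]; have [MmK eK] := hmf K KS.
rewrite eK pblock_Gam !phi_wm //; apply/eqP/esym; apply/(@rcoset_eqP _ (Group (KS_gs KS))).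
by rewrite mem_rcoset; apply: hr.
Qed.

End Surj.

Lemma cd_Minv' (T : finType) (G M : {group {perm T}}) (w : T) (E : {set {set {set T}}}) :
  M <| G -> minnormal M G -> [transitive M, on [set: T] | 'P] -> CD G E ->
  forall P, P \in E -> Minv M P.
Proof.
move=> nMG minM trM cdG P PE; split.
  by have := cd_part cdG.1 PE.
by move=> m Mm; have := cd_Minv w nMG minM trM cdG Mm PE.
Qed.

Lemma Kmap_sub (T : finType) (G M : {group {perm T}}) (w : T) (E1 E2 : {set {set {set T}}}) :
  M <| G -> minnormal M G -> [transitive M, on [set: T] | 'P] -> CD G E1 -> CD G E2 ->
  Kmap M w E1 = Kmap M w E2 -> E1 \subset E2.
Proof.
move=> nMG minM trM c1 c2 eK; apply/subsetP => P PE.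
have : 'N_M(pblock P w | 'P) \in Kmap M w E2 by rewrite -eK; apply: imset_f.
case/imsetP => Q QE e.
have iP := cd_Minv' w nMG minM trM c1 PE.
have iQ := cd_Minv' w nMG minM trM c2 QE.
by have := Minv_inj trM iP iQ e => ->.
Qed.

Theorem theorem4p2 (T : finType) (G M : {group {perm T}}) (w : T) :
  M <| G -> minnormal M G -> [transitive M, on [set: T] | 'P] ->
  [/\ (* well-defined: maps CD(G) into G_w-invariant Cartesian systems *)
      forall E, CD G E -> cart_system M w (Kmap M w E) /\ conj_invariant G w (Kmap M w E),
      (* injective on CD(G) *)
      forall E1 E2, CD G E1 -> CD G E2 -> Kmap M w E1 = Kmap M w E2 -> E1 = E2 &
      (* surjective onto the G_w-invariant Cartesian systems *)
      forall S, cart_system M w S -> conj_invariant G w S ->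
        exists E, CD G E /\ Kmap M w E = S].
Proof.
move=> nMG minM trM; split.
- by move=> E cdG; apply: forward.
- move=> E1 E2 c1 c2 eK; apply/eqP; rewrite eqEsubset.
  by rewrite (Kmap_sub nMG minM trM c1 c2 eK) (Kmap_sub nMG minM trM c2 c1 (esym eK)).
- by move=> S cs ci; have := surj_main nMG trM cs ci.
Qed.
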